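(* Let $s$ be a CorePolyC statement and $\ell\in\{\#t,\#f\}$. There are constants $C,d,k$ (depending only on $s$) such that for every consistent pair $(\Gamma,\Sigma)$ with $\Gamma,\ell\vdash s:\Gamma'$ and $\Sigma\vdash s\Downarrow\Sigma'$ for some $\Gamma',\Sigma'$: (1) if $\ell=\#t$, then $\mathrm{sz}(\Sigma')\mathbin{\dot-}\mathrm{sz}(\Sigma)\le C\,(\mathrm{sz}(\Sigma|_{\mathrm{dom}_I(\Gamma)})^{d}+1)$; (2) if $\ell=\#f$, then $\mathrm{sz}(\Sigma')\mathbin{\dot-}\mathrm{sz}(\Sigma)\le C\,(\mathrm{sz}(\Sigma)^{d^{k}}+1)$.
   Context: CorePolyC. Types are $\mathtt{iint},\mathtt{int},\mathtt{bool}$; $\mathsf{Int}=\{\mathtt{iint},\mathtt{int}\}$, ordered by $\mathtt{iint}\preccurlyeq\mathtt{int}$. Values are unbounded integers ($\mathbb Z$) and booleans $\#t,\#f$. A value $v$ is consistent with a type $t$ if ($v\in\mathbb Z$ and $t\in\mathsf{Int}$) or ($v$ boolean and $t=\mathtt{bool}$). Expressions: variables $x$; constants (nonempty decimal digit strings denoting natural numbers; $\mathtt{true}$, $\mathtt{false}$); operator applications $\mathtt{op}(e_1,\dots,e_m)$; parenthesized $(e)$. Operators and semantics: unary $-$ (negation); binary $+,-,/,\%$ (integer addition, subtraction, division, remainder, with division and remainder by $0$ returning $0$); $\mathtt{size}$, with $\mathtt{size}(v)=\lceil\log_2(\mathrm{abs}(v)+1)\rceil$; comparisons $\texttt{>=},\texttt{<=},\texttt{>},\texttt{<},\texttt{==},\texttt{!=}$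 on integers returning booleans; boolean $\texttt{!},\texttt{\&\&},\texttt{||}$. Statements: declaration $t\ x;$; assignment $x=e;$; block $\{s_1\dots s_m\}$; conditional $\mathbf{if}(e)\ s_1\ \mathbf{else}\ s_2$; loop $\mathbf{for}(x<\mathtt{size}(e))\ s$ (loop bounds are always syntactically of the form $\mathtt{size}(e)$). Semantics (big-step). A store $\Sigma$ is a finite partial map from variables to values; $\Sigma[x\mapsto v]$ is the update. $\Sigma\vdash e\Downarrow v$: a variable $x\in\mathrm{dom}\,\Sigma$ evaluates to $\Sigma(x)$, constants to their value, $\mathtt{op}(e_1,\dots,e_m)$ to $\mathtt{op}$ applied to the values of the $e_i$. $\Sigma\vdash s\Downarrow\Sigma'$: $t\ x;$ gives $\Sigma[x\mapsto 0]$ if $t\in\mathsf{Int}$ and $\Sigma[x\mapsto\#f]$ if $t=\mathtt{bool}$; $x=e;$ (with $x\in\mathrm{dom}\,\Sigma$) gives $\Sigma[x\mapsto v]$ where $\Sigma\vdash e\Downarrow v$; a sequence or block executes its statements in order threading the store (a block returns the final store); a conditional evaluates its guard to a boolean and executes the corresponding branch; $\mathbf{for}(x<e)\ s$ evaluates $e$ once to an integer $i$, sets $\Sigma_0=\Sigma$, executes $s$ from $\Sigma_j[x\mapsto j]$ obtaining $\Sigma_{j+1}$ for $j=0,\dots,i-1$, and ends in $\Sigma_i$ (i.e. in $\Sigma$ if $i\le 0$). Type system. A typing environment $\Gamma$ is a finite partial map from variables to types; $\ell\in\{\#t,\#f\}$ is the loop indicator. Expression typing $\Gamma,\ell\vdash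 e:t$: a variable $x\in\mathrm{dom}\,\Gamma$ has type $\Gamma(x)$; digit literals have type $\mathtt{iint}$, $\mathtt{true},\mathtt{false}$ have type $\mathtt{bool}$; $\texttt{!},\texttt{\&\&},\texttt{||}$ take $\mathtt{bool}$ arguments to $\mathtt{bool}$; comparisons take arguments with types in $\mathsf{Int}$ to $\mathtt{bool}$; $+,-,/,\%$ take arguments with types in $\mathsf{Int}$ to their supremum under $\preccurlyeq$ ($\mathtt{iint}$ iff all arguments are $\mathtt{iint}$); $\mathtt{size}$ takes only an $\mathtt{iint}$ argument, giving $\mathtt{iint}$; parentheses preserve types. Statement typing $\Gamma,\ell\vdash s:\Gamma'$: $t\ x;$ is typable iff $x\notin\mathrm{dom}\,\Gamma$ and not($\ell=\#t$ and $t=\mathtt{iint}$), giving $\Gamma[x\mapsto t]$; $x=e;$ is typable iff $x\in\mathrm{dom}\,\Gamma$, not($\ell=\#t$ and $\Gamma(x)=\mathtt{iint}$), and $\Gamma,\ell\vdash e:t$ with $t,\Gamma(x)$ both in $\mathsf{Int}$ or both $\mathtt{bool}$, giving $\Gamma$; a sequence $s_1\dots s_m$ threads $\Gamma_0=\Gamma$, $\Gamma_{i-1},\ell\vdash s_i:\Gamma_i$, giving $\Gamma_m$; a block $\{\tilde s\}$ is typable if its sequence is, giving $\Gamma$; a conditional needs a guard of type $\mathtt{bool}$ and both branches typable under $\Gamma,\ell$, giving $\Gamma$; $\mathbf{for}(x<e)\ s$ needs $\Gamma,\ell\vdash e:\mathtt{iint}$, $x\notin\mathrm{dom}\,\Gamma$,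 and $\Gamma[x\mapsto\mathtt{iint}],\#t\vdash s:\Gamma'$ for some $\Gamma'$, giving $\Gamma$. A store $\Sigma$ and typing environment $\Gamma$ are consistent (form a consistent pair) if $\mathrm{dom}\,\Gamma\subseteq\mathrm{dom}\,\Sigma$ and $\Sigma(x)$ is consistent with $\Gamma(x)$ for all $x\in\mathrm{dom}\,\Gamma$. $\mathrm{dom}_I(\Gamma)=\{x\in\mathrm{dom}\,\Gamma:\Gamma(x)=\mathtt{iint}\}$ and $\Sigma|_D$ is the restriction of $\Sigma$ to $D$. Sizes: $\mathrm{sz}(v)=\lceil\log_2(\mathrm{abs}(v)+1)\rceil$ for $v\in\mathbb Z$, $\mathrm{sz}(\#t)=\mathrm{sz}(\#f)=1$, $\mathrm{sz}(\Sigma)=\max_{x\in\mathrm{dom}\,\Sigma}\mathrm{sz}(\Sigma(x))$ ($0$ if empty). $a\mathbin{\dot-}b=\max(a-b,0)$. *)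

(* Defs.v *)
From Stdlib Require Import ZArith List Arith.
Import ListNotations.
Open Scope Z_scope.

Definition var := nat.

Inductive ty := TIint | TInt | TBool.

Definition isInt (t : ty) : Prop := t = TIint \/ t = TInt.

Definition tsup (t1 t2 : ty) : ty :=
  match t1, t2 with TIint, TIint => TIint | _, _ => TInt end.

Inductive unop := ONeg | OSize | ONot.
Inductive binop :=
  | OAdd | OSub | ODiv | OMod
  | OGe | OLe | OGt | OLt | OEq | ONe
  | OAnd | OOr.

Inductive expr :=
  | EVar (x : var)
  | EConst (n : nat)          (* decimal digit literal denoting a natural *)
  | ETrue | EFalse
  | EUn (o : unop) (e : expr)
  | EBin (o : binop) (e1 e2 : expr)
  | EParen (e : expr).

(* for(x < size(e)) s  is represented by  SFor x e s  (bound is size(e)) *)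
Inductive stmt :=
  | SDecl (t : ty) (x : var)
  | SAssign (x : var) (e : expr)
  | SBlock (ss : list stmt)
  | SIf (e : expr) (s1 s2 : stmt)
  | SFor (x : var) (e : expr) (s : stmt).

Inductive val := VInt (z : Z) | VBool (b : bool).

Definition pmap (A : Type) := list (var * A).

Fixpoint lookup {A} (m : pmap A) (x : var) : option A :=
  match m with
  | [] => None
  | (y, a) :: m' => if Nat.eqb x y then Some a else lookup m' x
  end.

Definition update {A} (m : pmap A) (x : var) (a : A) : pmap A := (x, a) :: m.

Definition in_dom {A} (m : pmap A) (x : var) : Prop := lookup m x <> None.

Definition store := pmap val.
Definition tenv := pmap ty.

Definition zsize (v : Z) : Z := Z.log2_up (Z.abs v + 1).

Definition zdiv (a b : Z) : Z := if b =? 0 then 0 else Z.quot a b.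
Definition zmod (a b : Z) : Z := if b =? 0 then 0 else Z.rem a b.

Definition eval_un (o : unop) (v : val) : option val :=
  match o, v with
  | ONeg, VInt z => Some (VInt (- z))
  | OSize, VInt z => Some (VInt (zsize z))
  | ONot, VBool b => Some (VBool (negb b))
  | _, _ => None
  end.

Definition eval_bin (o : binop) (v1 v2 : val) : option val :=
  match o, v1, v2 with
  | OAdd, VInt a, VInt b => Some (VInt (a + b))
  | OSub, VInt a, VInt b => Some (VInt (a - b))
  | ODiv, VInt a, VInt b => Some (VInt (zdiv a b))
  | OMod, VInt a, VInt b => Some (VInt (zmod a b))
  | OGe, VInt a, VInt b => Some (VBool (b <=? a))
  | OLe, VInt a, VInt b => Some (VBool (a <=? b))
  | OGt, VInt a, VInt b => Some (VBool (b <? a))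
  | OLt, VInt a, VInt b => Some (VBool (a <? b))
  | OEq, VInt a, VInt b => Some (VBool (a =? b))
  | ONe, VInt a, VInt b => Some (VBool (negb (a =? b)))
  | OAnd, VBool a, VBool b => Some (VBool (a && b))
  | OOr, VBool a, VBool b => Some (VBool (a || b))
  | _, _, _ => None
  end.

Inductive eval : store -> expr -> val -> Prop :=
  | Ev_var S x v : lookup S x = Some v -> eval S (EVar x) v
  | Ev_const S n : eval S (EConst n) (VInt (Z.of_nat n))
  | Ev_true S : eval S ETrue (VBool true)
  | Ev_false S : eval S EFalse (VBool false)
  | Ev_un S o e v w : eval S e v -> eval_un o v = Some w -> eval S (EUn o e) w
  | Ev_bin S o e1 e2 v1 v2 w :
      eval S e1 v1 -> eval S e2 v2 -> eval_bin o v1 v2 = Some w ->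
      eval S (EBin o e1 e2) w
  | Ev_paren S e v : eval S e v -> eval S (EParen e) v.

Inductive exec : store -> stmt -> store -> Prop :=
  | Ex_decl_int S t x : isInt t -> exec S (SDecl t x) (update S x (VInt 0))
  | Ex_decl_bool S x : exec S (SDecl TBool x) (update S x (VBool false))
  | Ex_assign S x e v :
      in_dom S x -> eval S e v -> exec S (SAssign x e) (update S x v)
  | Ex_block S ss S' : exec_seq S ss S' -> exec S (SBlock ss) S'
  | Ex_if_t S e s1 s2 S' : eval S e (VBool true) -> exec S s1 S' -> exec S (SIf e s1 s2) S'
  | Ex_if_f S e s1 s2 S' : eval S e (VBool false) -> exec S s2 S' -> exec S (SIf e s1 s2) S'
  | Ex_for S x e s i S' :
      eval S (EUn OSize e) (VInt i) -> exec_loop S x s 0 i S' ->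
      exec S (SFor x e s) S'
with exec_seq : store -> list stmt -> store -> Prop :=
  | Ex_nil S : exec_seq S [] S
  | Ex_cons S s ss S1 S2 : exec S s S1 -> exec_seq S1 ss S2 -> exec_seq S (s :: ss) S2
(* exec_loop S x s j i S' : starting from Sigma_j = S, run iterations j..i-1 *)
with exec_loop : store -> var -> stmt -> Z -> Z -> store -> Prop :=
  | Ex_loop_done S x s j i : i <= j -> exec_loop S x s j i S
  | Ex_loop_step S x s j i S1 S' :
      j < i -> exec (update S x (VInt j)) s S1 -> exec_loop S1 x s (j + 1) i S' ->
      exec_loop S x s j i S'.

(* ---------- Type system (loop indicator l : bool, true = #t) ---------- *)
Definition un_ty (o : unop) (t : ty) : option ty :=
  match o, t with
  | ONeg, TIint => Some TIint
  | ONeg, TInt => Some TInt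
  | OSize, TIint => Some TIint
  | ONot, TBool => Some TBool
  | _, _ => None
  end.

Definition bin_ty (o : binop) (t1 t2 : ty) : option ty :=
  match o with
  | OAdd | OSub | ODiv | OMod =>
      match t1, t2 with
      | TBool, _ | _, TBool => None
      | _, _ => Some (tsup t1 t2)
      end
  | OGe | OLe | OGt | OLt | OEq | ONe =>
      match t1, t2 with
      | TBool, _ | _, TBool => None
      | _, _ => Some TBool
      end
  | OAnd | OOr =>
      match t1, t2 with
      | TBool, TBool => Some TBool
      | _, _ => None
      end
  end.

Inductive etyp : tenv -> bool -> expr -> ty -> Prop :=
  | Ty_var G l x t : lookup G x = Some t -> etyp G l (EVar x) t
  | Ty_const G l n : etyp G l (EConst n) TIint
  | Ty_true G l : etyp G l ETrue TBool
  | Ty_false G l : etyp G l EFalse TBool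
  | Ty_un G l o e t t' : etyp G l e t -> un_ty o t = Some t' -> etyp G l (EUn o e) t'
  | Ty_bin G l o e1 e2 t1 t2 t :
      etyp G l e1 t1 -> etyp G l e2 t2 -> bin_ty o t1 t2 = Some t ->
      etyp G l (EBin o e1 e2) t
  | Ty_paren G l e t : etyp G l e t -> etyp G l (EParen e) t.

Definition compat (t1 t2 : ty) : Prop :=
  (isInt t1 /\ isInt t2) \/ (t1 = TBool /\ t2 = TBool).

Inductive styp : tenv -> bool -> stmt -> tenv -> Prop :=
  | Ty_decl G l t x :
      lookup G x = None -> ~ (l = true /\ t = TIint) ->
      styp G l (SDecl t x) (update G x t)
  | Ty_assign G l x e tx t :
      lookup G x = Some tx -> ~ (l = true /\ tx = TIint) ->
      etyp G l e t -> compat t tx ->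
      styp G l (SAssign x e) G
  | Ty_block G l ss G' : styp_seq G l ss G' -> styp G l (SBlock ss) G
  | Ty_if G l e s1 s2 G1 G2 :
      etyp G l e TBool -> styp G l s1 G1 -> styp G l s2 G2 ->
      styp G l (SIf e s1 s2) G
  | Ty_for G l x e s G' :
      etyp G l (EUn OSize e) TIint -> lookup G x = None ->
      styp (update G x TIint) true s G' ->
      styp G l (SFor x e s) G
with styp_seq : tenv -> bool -> list stmt -> tenv -> Prop :=
  | Ty_nil G l : styp_seq G l [] G
  | Ty_cons G l s ss G1 G2 :
      styp G l s G1 -> styp_seq G1 l ss G2 -> styp_seq G l (s :: ss) G2.

Definition val_consistent (v : val) (t : ty) : Prop :=
  match v with
  | VInt _ => isInt t
  | VBool _ => t = TBool
  end.

Definition consistent (G : tenv) (S : store) : Prop :=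
  forall x t, lookup G x = Some t ->
    exists v, lookup S x = Some v /\ val_consistent v t.

Definition szv (v : val) : nat :=
  match v with
  | VInt z => Z.to_nat (zsize z)
  | VBool _ => 1%nat
  end.

Definition sz (S : store) : nat :=
  list_max (map (fun x => match lookup S x with Some v => szv v | None => 0%nat end)
                (map fst S)).

Definition sz_restr_I (S : store) (G : tenv) : nat :=
  list_max (map (fun x => match lookup G x, lookup S x with
                          | Some TIint, Some v => szv v
                          | _, _ => 0%nat end)
                (map fst G)).

(* Main.v *)
Require Import Defs.
From Stdlib Require Import ZArith List Arith Lia.
Import ListNotations.

Lemma zsize_nonneg z : (0 <= zsize z)%Z.
Proof. apply Z.log2_up_nonneg. Qed.

Lemma zsize_le z k : (0 <= k)%Z -> (zsize z <= k)%Z <-> (Z.abs z + 1 <= 2 ^ k)%Z.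
Proof. intros Hk. unfold zsize. rewrite <- Z.log2_up_le_pow2; [tauto|lia]. Qed.

Lemma zsize_mono a b : (Z.abs a <= Z.abs b)%Z -> (zsize a <= zsize b)%Z.
Proof. intros; unfold zsize; apply Z.log2_up_le_mono; lia. Qed.

Lemma zsize_tri a b c : (Z.abs c <= Z.abs a + Z.abs b)%Z ->
  (zsize c <= Z.max (zsize a) (zsize b) + 1)%Z.
Proof.
  intros H. pose proof (zsize_nonneg a). pose proof (zsize_nonneg b).
  set (k := Z.max (zsize a) (zsize b)).
  assert (Ha : (Z.abs a + 1 <= 2 ^ k)%Z).
  { apply zsize_le; unfold k; lia. }
  assert (Hb : (Z.abs b + 1 <= 2 ^ k)%Z).
  { apply zsize_le; unfold k; lia. }
  apply zsize_le. unfold k; lia.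
  replace (k+1)%Z with (Z.succ k) by lia. rewrite Z.pow_succ_r by (unfold k; lia). lia.
Qed.

Lemma zsize_self w : (0 <= w)%Z -> (zsize w <= w)%Z.
Proof.
  intros H. apply zsize_le; auto. pose proof (Z.pow_gt_lin_r 2 w ltac:(lia) H). lia.
Qed.

Lemma zsize_div a b : (zsize (zdiv a b) <= zsize a)%Z.
Proof.
  apply zsize_mono. unfold zdiv. destruct (b =? 0)%Z eqn:E. simpl; lia.
  apply Z.eqb_neq in E. rewrite <- Z.quot_abs by auto.
  pose proof (Z.quot_pos (Z.abs a) (Z.abs b)).
  assert (Z.abs a ÷ Z.abs b <= Z.abs a)%Z.
  { apply Z.quot_le_upper_bound. lia. nia. }
  pose proof (Z.quot_pos (Z.abs a) (Z.abs b) ltac:(lia) ltac:(lia)). lia.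
Qed.

Lemma zsize_mod a b : (zsize (zmod a b) <= zsize a)%Z.
Proof.
  apply zsize_mono. unfold zmod. destruct (b =? 0)%Z eqn:E. simpl; lia.
  apply Z.eqb_neq in E. rewrite <- Z.rem_abs by auto.
  pose proof (Z.rem_le (Z.abs a) (Z.abs b) ltac:(lia) ltac:(lia)).
  pose proof (Z.rem_nonneg (Z.abs a) (Z.abs b)). 
  assert (0 <= Z.rem (Z.abs a) (Z.abs b))%Z by (apply Z.rem_nonneg; lia). lia.
Qed.
Open Scope nat_scope.

Lemma lookup_in {A} (m : pmap A) x a : lookup m x = Some a -> In x (map fst m).
Proof.
  induction m as [|[y b] m IH]; simpl; [discriminate|].
  destruct (Nat.eqb x y) eqn:E; intros H.
  - left. apply Nat.eqb_eq in E; auto.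
  - right; auto.
Qed.

Lemma le_list_max (f : var -> nat) l x : In x l -> f x <= list_max (map f l).
Proof.
  intros Hx. assert (H := proj1 (list_max_le (map f l) _) (le_n _)).
  rewrite Forall_forall in H. apply H. apply in_map; auto.
Qed.

Lemma sz_lookup S x v : lookup S x = Some v -> szv v <= sz S.
Proof.
  intros H. unfold sz.
  pose proof (le_list_max (fun x => match lookup S x with Some v => szv v | None => 0%nat end) (map fst S) x (lookup_in _ _ _ H)).
  simpl in H0. rewrite H in H0. auto.
Qed.

Lemma sz_update S x v : sz (update S x v) <= Nat.max (sz S) (szv v).
Proof.
  unfold sz at 1. apply list_max_le. rewrite Forall_forall.
  intros k Hk. apply in_map_iff in Hk. destruct Hk as [y [Hy _]]. subst k.
  simpl. destruct (Nat.eqb y x). lia.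
  destruct (lookup S y) eqn:E. apply sz_lookup in E. lia. lia.
Qed.

Definition Ibound (G : tenv) (S : store) (n : nat) : Prop :=
  forall x u, lookup G x = Some TIint -> lookup S x = Some u -> szv u <= n.

Lemma Ibound_sz G S : Ibound G S (sz S).
Proof. intros x u _ H. eapply sz_lookup; eauto. Qed.

Lemma Ibound_restr G S : Ibound G S (sz_restr_I S G).
Proof.
  intros x u HG HS. unfold sz_restr_I.
  pose proof (le_list_max (fun x => match lookup G x, lookup S x with
                          | Some TIint, Some v => szv v
                          | _, _ => 0%nat end) (map fst G) x (lookup_in _ _ _ HG)).
  simpl in H. rewrite HG, HS in H. auto.
Qed.

Fixpoint allvars (Q : var -> Prop) (e : expr) : Prop :=
  match e with
  | EVar x => Q x
  | EConst _ | ETrue | EFalse => True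
  | EUn _ e => allvars Q e
  | EBin _ e1 e2 => allvars Q e1 /\ allvars Q e2
  | EParen e => allvars Q e
  end.

Fixpoint ce (e : expr) : nat :=
  match e with
  | EVar _ => 0
  | EConst n => Z.to_nat (zsize (Z.of_nat n)) + 1
  | ETrue | EFalse => 1
  | EUn _ e => ce e + 1
  | EBin _ e1 e2 => ce e1 + ce e2 + 1
  | EParen e => ce e
  end.

Lemma eval_size S e v : eval S e v -> forall Q M, allvars Q e ->
  (forall x u, Q x -> lookup S x = Some u -> szv u <= M) -> szv v <= M + ce e.
Proof.
  induction 1; intros Q M HA HQ; simpl in *.
  - pose proof (HQ _ _ HA H). lia.
  - lia.
  - lia.
  - lia.
  - specialize (IHeval Q M HA HQ).
    destruct o, v; simpl in H0; inversion H0; subst; simpl in *; try lia.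
    + unfold zsize in *. rewrite Z.abs_opp. lia.
    + pose proof (zsize_self (zsize z) (zsize_nonneg z)).
      pose proof (zsize_nonneg (zsize z)). lia.
  - destruct HA as [HA1 HA2].
    specialize (IHeval1 Q M HA1 HQ). specialize (IHeval2 Q M HA2 HQ).
    destruct o, v1, v2; simpl in H1; inversion H1; subst; simpl in *; try lia;
    pose proof (zsize_nonneg z); pose proof (zsize_nonneg z0).
    + pose proof (zsize_tri z z0 (z + z0) ltac:(lia)).
      pose proof (zsize_nonneg (z + z0)). lia.
    + pose proof (zsize_tri z z0 (z - z0) ltac:(lia)).
      pose proof (zsize_nonneg (z - z0)). lia.
    + pose proof (zsize_div z z0). pose proof (zsize_nonneg (zdiv z z0)). lia.
    + pose proof (zsize_mod z z0). pose proof (zsize_nonneg (zmod z z0)). lia.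
  - apply (IHeval Q M HA HQ).
Qed.

Lemma etyp_iint e : forall G l, etyp G l e TIint -> allvars (fun x => lookup G x = Some TIint) e.
Proof.
  induction e; intros G l H; inversion H; subst; simpl; auto.
  - destruct o, t; simpl in *; try discriminate; eauto.
  - destruct o, t1, t2; simpl in *; try discriminate; split; eauto.
  - eauto.
Qed.

Section SInd.
Variable P : stmt -> Prop.
Hypothesis Hd : forall t x, P (SDecl t x).
Hypothesis Ha : forall x e, P (SAssign x e).
Hypothesis Hb : forall ss, Forall P ss -> P (SBlock ss).
Hypothesis Hi : forall e s1 s2, P s1 -> P s2 -> P (SIf e s1 s2).
Hypothesis Hf : forall x e s, P s -> P (SFor x e s).
Fixpoint stmt_ind2 (s : stmt) : P s :=
  match s with
  | SDecl t x => Hd t x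
  | SAssign x e => Ha x e
  | SBlock ss => Hb ss ((fix F (l : list stmt) : Forall P l :=
       match l with [] => Forall_nil _ | h :: t => Forall_cons _ (stmt_ind2 h) (F t) end) ss)
  | SIf e s1 s2 => Hi e s1 s2 (stmt_ind2 s1) (stmt_ind2 s2)
  | SFor x e s => Hf x e s (stmt_ind2 s)
  end.
End SInd.

Lemma pos_pow m d : 1 <= (m + 1) ^ d.
Proof. pose proof (Nat.pow_nonzero (m+1) d ltac:(lia)). lia. Qed.

Lemma pow_mono_r m a b : a <= b -> (m + 1) ^ a <= (m + 1) ^ b.
Proof. intros; apply Nat.pow_le_mono_r; lia. Qed.

Lemma pow_shift n c d : (n + c + 1) ^ d <= (c + 1) ^ d * (n + 1) ^ d.
Proof. rewrite <- Nat.pow_mul_l. apply Nat.pow_le_mono_l. nia. Qed.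

Lemma sum_bound m C1 d1 C2 d2 :
  C1 * (m + 1) ^ d1 + C2 * (m + 1) ^ d2 <= (C1 + C2) * (m + 1) ^ (d1 + d2).
Proof.
  pose proof (pow_mono_r m d1 (d1 + d2) ltac:(lia)).
  pose proof (pow_mono_r m d2 (d1 + d2) ltac:(lia)). nia.
Qed.

Lemma loop_arith N Cb db : N * (N + Cb * (N + 1) ^ db) <= (Cb + 1) * (N + 1) ^ (db + 2).
Proof.
  rewrite Nat.pow_add_r. pose proof (pos_pow N db).
  set (P := (N+1)^db) in *. simpl. nia.
Qed.

Lemma compose_arith x m C1 d1 C2 d2 : x <= C1 * (m + 1) ^ d1 ->
  C2 * (x + 1) ^ d2 <= C2 * (C1 + 1) ^ d2 * (m + 1) ^ (d1 * d2).
Proof.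
  intros H. pose proof (pos_pow m d1).
  rewrite <- Nat.mul_assoc. apply Nat.mul_le_mono_l.
  rewrite Nat.pow_mul_r, <- Nat.pow_mul_l. apply Nat.pow_le_mono_l. nia.
Qed.

Lemma absorb m C d : m + C * (m + 1) ^ d <= (C + 1) * (m + 1) ^ (d + 1).
Proof.
  rewrite Nat.pow_add_r. pose proof (pos_pow m d). simpl.
  set (P := (m+1)^d) in *. nia.
Qed.

Lemma final_arith n d : (n + 1) ^ d <= 2 ^ d * (n ^ d + 1).
Proof.
  destruct n.
  - simpl. rewrite Nat.pow_1_l. pose proof (Nat.pow_nonzero 2 d). lia.
  - assert ((S n + 1) ^ d <= (2 * S n) ^ d) by (apply Nat.pow_le_mono_l; lia).
    rewrite Nat.pow_mul_l in H. lia.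
Qed.

Definition LB (s : stmt) (C d : nat) : Prop :=
  forall G G' S S' n, styp G true s G' -> exec S s S' -> Ibound G S n ->
  (forall y, lookup G y = Some TIint -> lookup S' y = lookup S y) /\
  (forall y t, lookup G y = Some t -> lookup G' y = Some t) /\
  (forall y, lookup G' y = Some TIint -> lookup G y = Some TIint) /\
  sz S' <= sz S + C * (n + 1) ^ d.

Lemma loop_iter G x s Cb db (HB : LB s Cb db) G1
  (Hty : styp (update G x TIint) true s G1) (Hx : lookup G x = None) n N (HnN : n <= N) :
  forall S j i S', exec_loop S x s j i S' -> (0 <= j)%Z -> (i <= Z.of_nat N)%Z -> Ibound G S n ->
  (forall y, lookup G y = Some TIint -> lookup S' y = lookup S y) /\
  sz S' <= sz S + Z.to_nat (i - j) * (N + Cb * (N + 1) ^ db).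
Proof.
  intros S j i S' H. induction H; intros Hj Hi HI.
  - split; auto. replace (Z.to_nat (i - j)) with 0 by lia. lia.
  - assert (HI1 : Ibound (update G x TIint) (update S x (VInt j)) N).
    { intros y u Hy Hu. simpl in Hy, Hu. destruct (Nat.eqb y x) eqn:E.
      - inversion Hu; subst. simpl.
        pose proof (zsize_self j Hj). pose proof (zsize_nonneg j). lia.
      - specialize (HI y u Hy Hu). lia. }
    destruct (HB _ _ _ _ _ Hty H0 HI1) as [P1 [_ [_ Z1]]].
    assert (Pres : forall y, lookup G y = Some TIint -> lookup S1 y = lookup S y).
    { intros y Hy. assert (y <> x) by (intro; subst; congruence).
      rewrite P1 by (simpl; rewrite (proj2 (Nat.eqb_neq y x) H2); auto).
      simpl. rewrite (proj2 (Nat.eqb_neq y x) H2); auto. }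
    assert (HI2 : Ibound G S1 n).
    { intros y u Hy Hu. rewrite Pres in Hu by auto. eauto. }
    assert (Hj1 : (0 <= j + 1)%Z) by lia.
    destruct (IHexec_loop HB Hty Hx Hj1 Hi HI2) as [P2 Z2].
    split. { intros y Hy. rewrite P2, Pres; auto. }
    pose proof (sz_update S x (VInt j)).
    assert (szv (VInt j) <= N).
    { simpl. pose proof (zsize_self j Hj). pose proof (zsize_nonneg j). lia. }
    replace (Z.to_nat (i - j)) with (Datatypes.S (Z.to_nat (i - (j + 1)))) by lia.
    simpl. set (K := N + Cb * (N + 1) ^ db) in *. nia.
Qed.

Lemma for_case x e s Cb db (HB : LB s Cb db) G l S S' n G1 :
  etyp G l (EUn OSize e) TIint -> lookup G x = None ->
  styp (update G x TIint) true s G1 -> exec S (SFor x e s) S' -> Ibound G S n ->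
  (forall y, lookup G y = Some TIint -> lookup S' y = lookup S y) /\
  sz S' <= sz S + ((Cb + 1) * (ce e + 1) ^ (db + 2)) * (n + 1) ^ (db + 2).
Proof.
  intros Hte Hx Hs Hex HI.
  assert (exists i, eval S (EUn OSize e) (VInt i) /\ exec_loop S x s 0 i S') as [i [Hev Hloop]]
    by (inversion Hex; subst; eauto).
  assert (exists z, eval S e (VInt z) /\ i = zsize z) as [z [Hev' ->]].
  { inversion Hev; subst. destruct v; simpl in *; inversion H4; subst; eauto. }
  assert (etyp G l e TIint) as H3.
  { inversion Hte; subst. destruct t; simpl in *; try discriminate; auto. }
  rename Hev' into H2, Hloop into H7.
  pose proof (etyp_iint _ _ _ H3) as HA.
  pose proof (eval_size _ _ _ H2 _ n HA HI) as Hsz. simpl in Hsz.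
  pose proof (zsize_nonneg z).
  destruct (loop_iter G x s Cb db HB G1 Hs Hx n (n + ce e) ltac:(lia) _ _ _ _ H7
     ltac:(lia) ltac:(lia) HI) as [P Z].
  split; auto.
  pose proof (loop_arith (n + ce e) Cb db).
  pose proof (pow_shift n (ce e) (db + 2)).
  assert (Z.to_nat (zsize z - 0) <= n + ce e) by lia.
  set (K := n + ce e + Cb * (n + ce e + 1) ^ db) in *. nia.
Qed.

Definition LBs (ss : list stmt) (C d : nat) : Prop :=
  forall G G' S S' n, styp_seq G true ss G' -> exec_seq S ss S' -> Ibound G S n ->
  (forall y, lookup G y = Some TIint -> lookup S' y = lookup S y) /\
  (forall y t, lookup G y = Some t -> lookup G' y = Some t) /\
  (forall y, lookup G' y = Some TIint -> lookup G y = Some TIint) /\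
  sz S' <= sz S + C * (n + 1) ^ d.

Lemma LB_seq ss : Forall (fun s => exists C d, LB s C d) ss -> exists C d, LBs ss C d.
Proof.
  induction 1.
  - exists 0, 0. intros G G' S S' n Ht He HI. inversion Ht; inversion He; subst.
    repeat split; auto. lia.
  - destruct H as [C1 [d1 H1]]. destruct IHForall as [C2 [d2 H2]].
    exists (C1 + C2), (d1 + d2). intros G G' S S' n Ht He HI.
    inversion Ht as [|? ? ? ? G1 ? Hs1 Hs2]; subst.
    inversion He as [|? ? ? S1 ? He1 He2]; subst.
    destruct (H1 _ _ _ _ _ Hs1 He1 HI) as [P1 [E1 [R1 Z1]]].
    assert (HI1 : Ibound G1 S1 n).
    { intros y u Hy Hu. apply R1 in Hy. rewrite P1 in Hu by auto. eauto. }
    destruct (H2 _ _ _ _ _ Hs2 He2 HI1) as [P2 [E2 [R2 Z2]]].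
    repeat split.
    + intros y Hy. rewrite P2 by auto. auto.
    + auto.
    + auto.
    + pose proof (sum_bound n C1 d1 C2 d2). lia.
Qed.

Lemma LB_all s : exists C d, LB s C d.
Proof.
  induction s using stmt_ind2.
  - exists 1, 0. intros G G' S S' n Ht He HI. inversion Ht; subst.
    assert (exists v, S' = update S x v /\ szv v <= 1) as [v [-> Hv]]
      by (inversion He; subst; eexists; split; eauto; simpl; lia).
    repeat split.
    + intros y Hy. simpl. destruct (Nat.eqb y x) eqn:E; auto.
      apply Nat.eqb_eq in E; subst; congruence.
    + intros y t0 Hy. simpl. destruct (Nat.eqb y x) eqn:E; auto.
      apply Nat.eqb_eq in E; subst; congruence.
    + intros y Hy. simpl in Hy. destruct (Nat.eqb y x) eqn:E; auto.
      inversion Hy; subst. exfalso; auto.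
    + pose proof (sz_update S x v). simpl in *. lia.
  - exists (ce e), 0. intros G G' S S' n Ht He HI. inversion Ht; inversion He; subst.
    repeat split; auto.
    + intros y Hy. simpl. destruct (Nat.eqb y x) eqn:E; auto.
      apply Nat.eqb_eq in E; subst. rewrite H1 in Hy. inversion Hy; subst. exfalso; auto.
    + pose proof (sz_update S x v).
      pose proof (eval_size _ _ _ H13 (fun _ => True) (sz S)).
      assert (forall e, allvars (fun _ => True) e) by (induction e0; simpl; auto).
      assert (szv v <= sz S + ce e) by (apply H0; auto; intros; eapply sz_lookup; eauto).
      simpl. lia.
  - apply LB_seq in H. destruct H as [C [d H]]. exists C, d.
    intros G G' S S' n Ht He HI. inversion Ht; inversion He; subst.
    destruct (H _ _ _ _ n ltac:(eassumption) ltac:(eassumption) HI) as [P [_ [_ Z]]]. repeat split; auto.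
  - destruct IHs1 as [C1 [d1 H1]], IHs2 as [C2 [d2 H2]].
    exists (C1 + C2), (d1 + d2). intros G G' S S' n Ht He HI.
    pose proof (sum_bound n C1 d1 C2 d2).
    inversion Ht; inversion He; subst.
    + destruct (H1 _ _ _ _ n ltac:(eassumption) ltac:(eassumption) HI) as [P [_ [_ Z]]]. repeat split; auto. lia.
    + destruct (H2 _ _ _ _ n ltac:(eassumption) ltac:(eassumption) HI) as [P [_ [_ Z]]]. repeat split; auto. lia.
  - destruct IHs as [Cb [db HB]].
    exists ((Cb + 1) * (ce e + 1) ^ (db + 2)), (db + 2).
    intros G G' S S' n Ht He HI. inversion Ht; subst.
    destruct (for_case x e s Cb db HB _ true S S' n _ ltac:(eassumption) ltac:(eassumption) ltac:(eassumption) He HI) as [P Z].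
    repeat split; auto.
Qed.

Definition TB (s : stmt) (C d : nat) : Prop :=
  forall G G' S S', styp G false s G' -> exec S s S' -> sz S' <= C * (sz S + 1) ^ d.
Definition TBs (ss : list stmt) (C d : nat) : Prop :=
  forall G G' S S', styp_seq G false ss G' -> exec_seq S ss S' -> sz S' <= C * (sz S + 1) ^ d.

Lemma TB_seq ss : Forall (fun s => exists C d, TB s C d) ss -> exists C d, TBs ss C d.
Proof.
  induction 1.
  - exists 1, 1. intros G G' S S' Ht He. inversion He; subst. rewrite Nat.pow_1_r. lia.
  - destruct H as [C1 [d1 H1]]. destruct IHForall as [C2 [d2 H2]].
    exists (C2 * (C1 + 1) ^ d2), (d1 * d2). intros G G' S S' Ht He.
    inversion Ht as [|? ? ? ? G1 ? Hs1 Hs2]; subst.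
    inversion He as [|? ? ? S1 ? He1 He2]; subst.
    pose proof (H1 _ _ _ _ Hs1 He1) as Z1.
    pose proof (H2 _ _ _ _ Hs2 He2) as Z2.
    pose proof (compose_arith _ _ _ _ C2 d2 Z1). lia.
Qed.

Lemma TB_all s : exists C d, TB s C d.
Proof.
  induction s using stmt_ind2.
  - exists 1, 1. intros G G' S S' Ht He.
    assert (exists v, S' = update S x v /\ szv v <= 1) as [v [-> Hv]]
      by (inversion He; subst; eexists; split; eauto; simpl; lia).
    pose proof (sz_update S x v). rewrite Nat.pow_1_r. lia.
  - exists (ce e + 1), 1. intros G G' S S' Ht He. inversion He; subst.
    pose proof (sz_update S x v).
    assert (forall e, allvars (fun _ => True) e) by (induction e0; simpl; auto).
    assert (szv v <= sz S + ce e)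
      by (eapply (eval_size _ _ _ ltac:(eassumption) (fun _ => True)); auto; intros; eapply sz_lookup; eauto).
    rewrite Nat.pow_1_r. nia.
  - apply TB_seq in H. destruct H as [C [d H]]. exists C, d.
    intros G G' S S' Ht He. inversion Ht; inversion He; subst. eauto.
  - destruct IHs1 as [C1 [d1 H1]], IHs2 as [C2 [d2 H2]].
    exists (C1 + C2), (d1 + d2). intros G G' S S' Ht He.
    pose proof (sum_bound (sz S) C1 d1 C2 d2).
    inversion Ht; inversion He; subst.
    + pose proof (H1 _ _ _ _ ltac:(eassumption) ltac:(eassumption)). lia.
    + pose proof (H2 _ _ _ _ ltac:(eassumption) ltac:(eassumption)). lia.
  - destruct (LB_all s) as [Cb [db HB]].
    set (C := (Cb + 1) * (ce e + 1) ^ (db + 2)).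
    exists (C + 1), (db + 2 + 1). intros G G' S S' Ht He. inversion Ht; subst.
    destruct (for_case x e s Cb db HB _ false S S' (sz S) _ ltac:(eassumption)
      ltac:(eassumption) ltac:(eassumption) He (Ibound_sz _ _)) as [_ Z].
    pose proof (absorb (sz S) C (db + 2)). fold C in Z. lia.
Qed.

Theorem lemma7 :
  forall (s : stmt) (l : bool),
  exists C d k : nat,
  forall (G G' : tenv) (S S' : store),
    consistent G S -> styp G l s G' -> exec S s S' ->
    (l = true -> (sz S' - sz S <= C * (sz_restr_I S G ^ d + 1))%nat) /\
    (l = false -> (sz S' - sz S <= C * (sz S ^ (d ^ k) + 1))%nat).
Proof.
  intros s l. destruct l.
  - destruct (LB_all s) as [C [d H]]. exists (C * 2 ^ d), d, 0.
    intros G G' S S' _ Ht He. split; [|discriminate]. intros _.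
    destruct (H _ _ _ _ _ Ht He (Ibound_restr G S)) as [_ [_ [_ Z]]].
    pose proof (final_arith (sz_restr_I S G) d). nia.
  - destruct (TB_all s) as [C [d H]]. exists (C * 2 ^ d), d, 1.
    intros G G' S S' _ Ht He. split; [discriminate|]. intros _.
    pose proof (H _ _ _ _ Ht He). rewrite Nat.pow_1_r.
    pose proof (final_arith (sz S) d). nia.
Qed.
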